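(* Let $(D,\subseteq)$ be a complete lattice and let $T:D\to D$ be a contracting operator. Then $T$ is order independent in the sense of Definition I if and only if it is order independent in the sense of Definition II.
   Context: Let $(D,\subseteq)$ be a complete lattice with largest element $\top$. For an operator $T:D\to D$: $T$ is contracting if $T(G)\subseteq G$ for all $G$; a fixpoint of $T$ is $G$ with $T(G)=G$. Iterations: $T^0:=\top$, $T^{\alpha+1}:=T(T^\alpha)$, $T^\beta:=\bigcap_{\alpha<\beta}T^\alpha$ for limit $\beta$. The closure ordinal $\alpha_T$ is the least $\alpha$ with $T^{\alpha+1}=T^\alpha$ (if it exists) and $T^{\alpha_T}$ is then the outcome of $T$ (for contracting $T$ the outcome always exists). Definition I (for contracting $T$): $T$ is order independent if $R^{\alpha_R}=T^{\alpha_T}$ for every operator $R:D\to D$ such that for all ordinals $\alpha$: (a) $T(R^\alpha)\subseteq R(R^\alpha)\subseteq R^\alpha$, and (b) if $T(R^\alpha)\subsetneq R^\alpha$ then $R(R^\alpha)\subsetneq R^\alpha$. Definition II (for arbitrary $T$): an operator $R:D\to D$ is a relaxation of $T$ if for all ordinals $\alpha$: (1) $T(R^\alpha)\subseteq R(R^\alpha)$; (2) if $T(R^\alpha)\subseteq R^\alpha$ then $R(R^\alpha)\subseteq R^\alpha$; (3) if $R^\alpha$ is a fixpoint of $R$ then $R^\alpha$ is a fixpoint of $T$. $T$ is order independent if the set $\{G\mid G$ is the outcome of some relaxation of $T\}$ has at most one element. *)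

(* Defs.v *)
Record complete_lattice := CompleteLattice {
  cl_car :> Type;
  cl_le : cl_car -> cl_car -> Prop;
  cl_le_refl : forall x, cl_le x x;
  cl_le_trans : forall x y z, cl_le x y -> cl_le y z -> cl_le x z;
  cl_le_antisym : forall x y, cl_le x y -> cl_le y x -> x = y;
  cl_meet : (cl_car -> Prop) -> cl_car;
  cl_meet_lb : forall (S : cl_car -> Prop) x, S x -> cl_le (cl_meet S) x;
  cl_meet_glb : forall (S : cl_car -> Prop) y,
      (forall x, S x -> cl_le y x) -> cl_le y (cl_meet S)
}.

Definition cl_top (L : complete_lattice) : L := cl_meet L (fun _ => False).

Definition cl_lt (L : complete_lattice) (x y : L) : Prop := cl_le L x y /\ x <> y.

(** Well-ordered types: used to index transfinite iterations.  Every ordinal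
    is the order type of an initial segment of such a type and, conversely,
    every element of such a type determines an ordinal (the order type of its
    strict initial segment). *)
Record well_order := WellOrder {
  wo_car :> Type;
  wo_lt : wo_car -> wo_car -> Prop;
  wo_wf : well_founded wo_lt;
  wo_trans : forall x y z, wo_lt x y -> wo_lt y z -> wo_lt x z;
  wo_total : forall x y, wo_lt x y \/ x = y \/ wo_lt y x
}.

Definition imm_pred (W : well_order) (p w : W) : Prop :=
  wo_lt W p w /\ ~ (exists v, wo_lt W p v /\ wo_lt W v w).

(** f : W -> L is the transfinite iteration of R along W:
    f at a minimum is top (meet of the empty family), at a successor of p it is
    R (f p), at a limit it is the meet of all earlier values. *)
Definition is_iteration (L : complete_lattice) (R : L -> L)
  (W : well_order) (f : W -> L) : Prop :=
  forall w : W,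
    (forall p, imm_pred W p w -> f w = R (f p)) /\
    ((forall p, ~ imm_pred W p w) ->
       f w = cl_meet L (fun x => exists v, wo_lt W v w /\ x = f v)).

(** "for all ordinals alpha, P (R^alpha)" *)
Definition forall_iterates (L : complete_lattice) (R : L -> L) (P : L -> Prop) : Prop :=
  forall (W : well_order) (f : W -> L), is_iteration L R W f ->
    forall w : W, P (f w).

Definition contracting (L : complete_lattice) (T : L -> L) : Prop :=
  forall G, cl_le L (T G) G.

(** G is the outcome of R: G = R^(alpha_R), where alpha_R is the least ordinal
    alpha with R^(alpha+1) = R^alpha. *)
Definition outcome (L : complete_lattice) (R : L -> L) (G : L) : Prop :=
  exists (W : well_order) (f : W -> L) (w : W),
    is_iteration L R W f /\ f w = G /\ R G = G /\
    (forall v, wo_lt W v w -> R (f v) <> f v).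

Definition order_independent_I (L : complete_lattice) (T : L -> L) : Prop :=
  forall R : L -> L,
    forall_iterates L R (fun G =>
      (cl_le L (T G) (R G) /\ cl_le L (R G) G) /\
      (cl_lt L (T G) G -> cl_lt L (R G) G)) ->
    exists G, outcome L R G /\ outcome L T G.

Definition relaxation (L : complete_lattice) (T R : L -> L) : Prop :=
  forall_iterates L R (fun G =>
    cl_le L (T G) (R G) /\
    (cl_le L (T G) G -> cl_le L (R G) G) /\
    (R G = G -> T G = G)).

Definition order_independent_II (L : complete_lattice) (T : L -> L) : Prop :=
  forall (R1 R2 : L -> L) (G1 G2 : L),
    relaxation L T R1 -> relaxation L T R2 ->
    outcome L R1 G1 -> outcome L R2 G2 -> G1 = G2.

(* Main.v *)
Require Import Defs.
From Stdlib Require Import Classical ClassicalEpsilon ProofIrrelevance.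

Lemma wo_irrefl (W : well_order) (x : W) : ~ wo_lt W x x.
Proof.
  intro H. pose proof (wo_wf W x) as A. revert H. induction A as [x _ IH].
  intro H. exact (IH x H H).
Qed.

Lemma wo_least (W : well_order) (P : W -> Prop) (x : W) : P x ->
  exists m, P m /\ forall y, wo_lt W y m -> ~ P y.
Proof.
  induction (wo_wf W x) as [x _ IH]. intro Hx.
  destruct (classic (exists y, wo_lt W y x /\ P y)) as [[y [Hy Py]]|N].
  - exact (IH y Hy Py).
  - exists x. split; [exact Hx|]. intros y Hy Py. apply N. eauto.
Qed.

Inductive Corr (W1 W2 : well_order) : W1 -> W2 -> Prop :=
| corr_intro : forall a b,
   (forall u, wo_lt W1 u a -> exists u', wo_lt W2 u' b /\ Corr W1 W2 u u') ->
   (forall u', wo_lt W2 u' b -> exists u, wo_lt W1 u a /\ Corr W1 W2 u u') ->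
   Corr W1 W2 a b.

Lemma corr1 {W1 W2 : well_order} {a b} : Corr W1 W2 a b ->
  forall u, wo_lt W1 u a -> exists u', wo_lt W2 u' b /\ Corr W1 W2 u u'.
Proof. intro H. destruct H as [a b H1 H2]. exact H1. Qed.

Lemma corr2 {W1 W2 : well_order} {a b} : Corr W1 W2 a b ->
  forall u', wo_lt W2 u' b -> exists u, wo_lt W1 u a /\ Corr W1 W2 u u'.
Proof. intro H. destruct H as [a b H1 H2]. exact H2. Qed.

Lemma corr_flip {W1 W2 : well_order} {a b} : Corr W1 W2 a b -> Corr W2 W1 b a.
Proof.
  revert b. induction (wo_wf W1 a) as [a _ IH]. intros b H.
  apply corr_intro.
  - intros u' Hu'. destruct (corr2 H u' Hu') as [u [Hu C]].
    exists u. split; [exact Hu|]. exact (IH u Hu u' C).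
  - intros u Hu. destruct (corr1 H u Hu) as [u' [Hu' C]].
    exists u'. split; [exact Hu'|]. exact (IH u Hu u' C).
Qed.

Lemma corr_inj1 {W1 W2 : well_order} (a z : W1) (y : W2) :
  Corr W1 W2 a y -> Corr W1 W2 z y -> a = z.
Proof.
  revert z y. induction (wo_wf W1 a) as [a _ IH]. intros z y Ha Hz.
  destruct (wo_total W1 a z) as [Hlt|[Heq|Hgt]]; [exfalso| exact Heq | exfalso].
  - destruct (corr1 Hz a Hlt) as [y1 [Hy1 C1]].
    destruct (corr2 Ha y1 Hy1) as [a2 [Ha2 C2]].
    pose proof (IH a2 Ha2 a y1 C2 C1) as E. rewrite E in Ha2.
    exact (wo_irrefl _ _ Ha2).
  - destruct (corr1 Ha z Hgt) as [y1 [Hy1 C1]].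
    destruct (corr2 Hz y1 Hy1) as [z2 [Hz2 C2]].
    pose proof (IH z2 (wo_trans _ _ _ _ Hz2 Hgt) z y1 C2 C1) as E.
    rewrite E in Hz2. exact (wo_irrefl _ _ Hz2).
Qed.

Lemma corr_mono {W1 W2 : well_order} (a b : W1) (a' b' : W2) :
  Corr W1 W2 a a' -> Corr W1 W2 b b' -> wo_lt W2 b' a' -> wo_lt W1 b a.
Proof.
  intros Ca Cb H. destruct (corr2 Ca b' H) as [c [Hc Cc]].
  rewrite (corr_inj1 c b b' Cc Cb) in Hc. exact Hc.
Qed.

Lemma corr_compare {W1 W2 : well_order} (w1 : W1) (w2 : W2) :
  (exists x', Corr W1 W2 w1 x') \/ (exists x, Corr W1 W2 x w2).
Proof.
  apply NNPP. intro N.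
  assert (N1 : ~ exists x', Corr W1 W2 w1 x') by tauto.
  assert (N2 : ~ exists x, Corr W1 W2 x w2) by tauto.
  destruct (wo_least W1 (fun v => ~ exists x', Corr W1 W2 v x') w1 N1) as [v [Hv Hmin]].
  pose (I := fun u' : W2 => exists u, wo_lt W1 u v /\ Corr W1 W2 u u').
  assert (Hw2 : ~ I w2). { intros [u [_ C]]. apply N2; eauto. }
  destruct (wo_least W2 (fun u' => ~ I u') w2 Hw2) as [m [Hm Hmmin]].
  apply Hv. exists m. apply corr_intro.
  - intros u Hu. assert (E := Hmin u Hu). apply NNPP in E. destruct E as [u' C].
    exists u'. split; [|exact C].
    destruct (wo_total W2 u' m) as [H|[H|H]]; [exact H| |].
    + exfalso. apply Hm. subst. exists u. auto.
    + exfalso. apply Hm. destruct (corr2 C m H) as [y [Hy Cy]].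
      exists y. split; [exact (wo_trans _ _ _ _ Hy Hu)|exact Cy].
  - intros u' Hu'. assert (E := Hmmin u' Hu'). apply NNPP in E. exact E.
Qed.

Lemma imm_pred_corr {W1 W2 : well_order} {a b p} : Corr W1 W2 a b -> imm_pred W1 p a ->
  exists p', imm_pred W2 p' b /\ Corr W1 W2 p p'.
Proof.
  intros C [Hp Hn]. destruct (corr1 C p Hp) as [p' [Hp' Cp]].
  exists p'. split; [|exact Cp]. split; [exact Hp'|].
  intros [v [H1 H2]]. destruct (corr2 C v H2) as [u [Hu Cu]].
  apply Hn. exists u. split; [exact (corr_mono u p v p' Cu Cp H1)|exact Hu].
Qed.

Lemma meet_ext (L : complete_lattice) (S1 S2 : L -> Prop) :
  (forall x, S1 x <-> S2 x) -> cl_meet L S1 = cl_meet L S2.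
Proof.
  intro H. apply cl_le_antisym; apply cl_meet_glb; intros x Hx; apply cl_meet_lb;
  apply H; exact Hx.
Qed.

Lemma corr_iter {L : complete_lattice} {R : L -> L} {W1 W2 : well_order} {f g} :
  is_iteration L R W1 f -> is_iteration L R W2 g ->
  forall a b, Corr W1 W2 a b -> f a = g b.
Proof.
  intros Hf Hg a. induction (wo_wf W1 a) as [a _ IH]. intros b C.
  destruct (classic (exists p, imm_pred W1 p a)) as [[p Hp]|N].
  - destruct (imm_pred_corr C Hp) as [p' [Hp' Cp]].
    rewrite (proj1 (Hf a) p Hp), (proj1 (Hg b) p' Hp').
    f_equal. apply IH; [exact (proj1 Hp)|exact Cp].
  - assert (N' : forall p', ~ imm_pred W2 p' b).
    { intros p' Hp'. destruct (imm_pred_corr (corr_flip C) Hp') as [p [Hp _]].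
      apply N; eauto. }
    rewrite (proj2 (Hf a) (fun p Hp => N (ex_intro _ p Hp))), (proj2 (Hg b) N').
    apply meet_ext. intro x. split.
    + intros [v [Hv ->]]. destruct (corr1 C v Hv) as [v' [Hv' Cv]].
      exists v'. split; [exact Hv'|]. apply IH; assumption.
    + intros [v' [Hv' ->]]. destruct (corr2 C v' Hv') as [v [Hv Cv]].
      exists v. split; [exact Hv|]. symmetry; apply IH; assumption.
Qed.

Lemma outcome_unique L R G1 G2 : outcome L R G1 -> outcome L R G2 -> G1 = G2.
Proof.
  assert (K : forall (W1 W2 : well_order) f g (w1 : W1) (w2 : W2) x',
     is_iteration L R W1 f -> is_iteration L R W2 g ->
     R (f w1) = f w1 -> (forall v, wo_lt W1 v w1 -> R (f v) <> f v) ->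
     R (g w2) = g w2 -> (forall v, wo_lt W2 v w2 -> R (g v) <> g v) ->
     Corr W1 W2 w1 x' -> f w1 = g w2).
  { intros W1 W2 f g w1 w2 x' Hf Hg F1 N1 F2 N2 C.
    pose proof (corr_iter Hf Hg _ _ C) as E.
    destruct (wo_total W2 x' w2) as [H|[H|H]].
    - exfalso. apply (N2 x' H). rewrite <- E. exact F1.
    - subst. exact E.
    - exfalso. destruct (corr2 C w2 H) as [u [Hu Cu]].
      apply (N1 u Hu). rewrite (corr_iter Hf Hg _ _ Cu). exact F2. }
  intros [W1 [f [w1 [Hf [E1 [F1 N1]]]]]] [W2 [g [w2 [Hg [E2 [F2 N2]]]]]].
  subst G1 G2.
  destruct (corr_compare w1 w2) as [[x' C]|[x C]].
  - exact (K _ _ _ _ _ _ _ Hf Hg F1 N1 F2 N2 C).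
  - symmetry. exact (K _ _ _ _ _ _ _ Hg Hf F2 N2 F1 N1 (corr_flip C)).
Qed.

Inductive Tw (L : complete_lattice) (S : L -> L) : L -> Prop :=
| tw_step : forall x, Tw L S x -> Tw L S (S x)
| tw_meet : forall P : L -> Prop, (forall x, P x -> Tw L S x) -> Tw L S (cl_meet L P).

Definition extreme (L : complete_lattice) (S : L -> L) (c : L) : Prop :=
  forall y, Tw L S y -> cl_lt L c y -> cl_le L c (S y).

Lemma tw_lemma1 L S (hS : forall x, cl_le L (S x) x) c :
  extreme L S c -> forall y, Tw L S y -> cl_le L c y \/ cl_le L y (S c).
Proof.
  intros Ec y Ty. induction Ty as [z Tz IH | P HP IH].
  - destruct IH as [H|H].
    + destruct (classic (c = z)) as [->|Ne].
      * right. apply cl_le_refl.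
      * left. apply (Ec z Tz). split; assumption.
    + right. exact (cl_le_trans L _ _ _ (hS z) H).
  - destruct (classic (forall x, P x -> cl_le L c x)) as [A|A].
    + left. apply cl_meet_glb. exact A.
    + apply not_all_ex_not in A. destruct A as [x A].
      apply imply_to_and in A. destruct A as [Px Nx].
      destruct (IH x Px) as [H|H]; [contradiction|].
      right. exact (cl_le_trans L _ _ _ (cl_meet_lb L P x Px) H).
Qed.

Lemma tw_lemma2 L S (hS : forall x, cl_le L (S x) x) c :
  Tw L S c -> extreme L S c.
Proof.
  intro Tc. induction Tc as [d Td IH | P HP IH].
  - intros y Ty [Hle Hne].
    destruct (tw_lemma1 L S hS d IH y Ty) as [H|H].
    + destruct (classic (d = y)) as [->|Ne].
      * apply cl_le_refl.
      * exact (cl_le_trans L _ _ _ (hS d) (IH y Ty (conj H Ne))).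
    + exfalso. apply Hne. apply cl_le_antisym; assumption.
  - intros y Ty [Hle Hne].
    destruct (classic (forall q, P q -> cl_le L y (S q))) as [A|A].
    + exfalso. apply Hne. apply cl_le_antisym; [exact Hle|].
      apply cl_meet_glb. intros q Pq. exact (cl_le_trans L _ _ _ (A q Pq) (hS q)).
    + apply not_all_ex_not in A. destruct A as [q A].
      apply imply_to_and in A. destruct A as [Pq Nq].
      destruct (tw_lemma1 L S hS q (IH q Pq) y Ty) as [H|H]; [|contradiction].
      destruct (classic (q = y)) as [<-|Ne].
      * destruct (tw_lemma1 L S hS q (IH q Pq) _ (tw_meet L S P HP)) as [H2|H2].
        -- exfalso. apply Hne. apply cl_le_antisym; [exact Hle|].
           exact (cl_le_trans L _ _ _ H (cl_le_trans L _ _ _ H2 (cl_le_refl L _))).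
        -- exact H2.
      * exact (cl_le_trans L _ _ _ (cl_meet_lb L P q Pq) (IH q Pq y Ty (conj H Ne))).
Qed.

Lemma tw_key L S (hS : forall x, cl_le L (S x) x) x y :
  Tw L S x -> Tw L S y -> cl_le L x y \/ cl_le L y (S x).
Proof. intros Tx Ty. exact (tw_lemma1 L S hS x (tw_lemma2 L S hS x Tx) y Ty). Qed.

Lemma tw_fix_min L S (hS : forall x, cl_le L (S x) x) m :
  Tw L S m -> S m = m -> forall y, Tw L S y -> cl_le L m y.
Proof.
  intros Tm Fm y Ty. induction Ty as [z Tz IH | P HP IH].
  - destruct (tw_key L S hS z m Tz Tm) as [H|H].
    + assert (z = m) by (apply cl_le_antisym; assumption). subst z.
      rewrite Fm. apply cl_le_refl.
    + exact H.
  - apply cl_meet_glb. exact IH.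
Qed.

Definition tw_car (L : complete_lattice) (S : L -> L) := {x : L | Tw L S x}.
Definition tw_lt (L : complete_lattice) (S : L -> L) (a b : tw_car L S) : Prop :=
  cl_lt L (proj1_sig b) (proj1_sig a).

Lemma tw_trans L S : forall x y z, tw_lt L S x y -> tw_lt L S y z -> tw_lt L S x z.
Proof.
  intros x y z [H1 N1] [H2 N2]. split.
  - exact (cl_le_trans L _ _ _ H2 H1).
  - intro E. apply N1. apply cl_le_antisym; [exact H1|].
    rewrite <- E. exact H2.
Qed.

Lemma tw_sig_eq L S (a b : tw_car L S) : proj1_sig a = proj1_sig b -> a = b.
Proof.
  destruct a as [x Hx], b as [y Hy]. simpl. intro E. subst y.
  rewrite (proof_irrelevance _ Hx Hy). reflexivity.
Qed.

Lemma tw_total L S (hS : forall x, cl_le L (S x) x) :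
  forall x y, tw_lt L S x y \/ x = y \/ tw_lt L S y x.
Proof.
  intros a b.
  destruct (classic (proj1_sig a = proj1_sig b)) as [E|Ne].
  - right; left. apply tw_sig_eq. exact E.
  - destruct (tw_key L S hS _ _ (proj2_sig a) (proj2_sig b)) as [H|H].
    + right; right. split; [exact H|exact Ne].
    + left. split.
      * exact (cl_le_trans L _ _ _ H (hS _)).
      * intro E. apply Ne. symmetry. exact E.
Qed.

Lemma tw_wf L S (hS : forall x, cl_le L (S x) x) : well_founded (tw_lt L S).
Proof.
  intro a. apply NNPP. intro Na.
  pose (P := fun b : tw_car L S => ~ Acc (tw_lt L S) b).
  pose (M := cl_meet L (fun t => Tw L S t /\ forall b, P b -> cl_le L (proj1_sig b) t)).
  assert (TM : Tw L S M). { apply tw_meet. intros x [Hx _]; exact Hx. }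
  assert (UB : forall b, P b -> cl_le L (proj1_sig b) M).
  { intros b Pb. apply cl_meet_glb. intros x [_ Hx]. exact (Hx b Pb). }
  destruct (classic (P (exist _ M TM))) as [PM|PM].
  - apply PM. constructor. intros y [Hy Ne]. apply NNPP. intro Py.
    apply Ne. apply cl_le_antisym; [exact Hy| exact (UB y Py)].
  - assert (Lt : forall b, P b -> cl_le L (proj1_sig b) (S M)).
    { intros b Pb.
      destruct (tw_key L S hS M (proj1_sig b) TM (proj2_sig b)) as [H|H]; [|exact H].
      exfalso. apply PM. intro AM. apply Pb.
      assert (b = exist _ M TM) as ->; [|exact AM].
      apply tw_sig_eq. simpl. apply cl_le_antisym; [exact (UB b Pb)|exact H]. }
    assert (FM : S M = M).
    { apply cl_le_antisym; [apply hS|]. apply cl_meet_lb. split.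
      - apply tw_step. exact TM.
      - exact Lt. }
    pose proof (tw_fix_min L S hS M TM FM (proj1_sig a) (proj2_sig a)) as H1.
    apply PM. intro AM. apply Na.
    assert (a = exist _ M TM) as ->; [|exact AM].
    apply tw_sig_eq. simpl. apply cl_le_antisym; [exact (UB a Na)|exact H1].
Qed.

Definition tw_wo L S (hS : forall x, cl_le L (S x) x) : well_order :=
  WellOrder (tw_car L S) (tw_lt L S) (tw_wf L S hS) (tw_trans L S) (tw_total L S hS).

Lemma tw_iter L S (hS : forall x, cl_le L (S x) x) :
  is_iteration L S (tw_wo L S hS) (fun a => proj1_sig a).
Proof.
  intro w. split.
  - intros p [[Hle Hne] Hn]. simpl in *.
    destruct (classic (proj1_sig w = S (proj1_sig p))) as [E|NE]; [exact E|].
    exfalso.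
    destruct (tw_key L S hS _ _ (proj2_sig p) (proj2_sig w)) as [H|H].
    + apply Hne. apply cl_le_antisym; assumption.
    + destruct (classic (S (proj1_sig p) = proj1_sig p)) as [F|F].
      * apply Hne. apply cl_le_antisym; [exact Hle|].
        exact (tw_fix_min L S hS _ (proj2_sig p) F _ (proj2_sig w)).
      * apply Hn. exists (exist _ (S (proj1_sig p)) (tw_step L S _ (proj2_sig p))).
        split; split; simpl; auto.
  - intro Hn. simpl.
    set (Q := fun x => exists v : tw_car L S, tw_lt L S v w /\ x = proj1_sig v).
    assert (H1 : cl_le L (proj1_sig w) (cl_meet L Q)).
    { apply cl_meet_glb. intros x [v [[Hv _] ->]]. exact Hv. }
    apply cl_le_antisym; [exact H1|]. apply NNPP. intro N.
    assert (TN : Tw L S (cl_meet L Q)).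
    { apply tw_meet. intros x [v [_ ->]]. exact (proj2_sig v). }
    apply (Hn (exist _ _ TN)). split.
    + split; [exact H1|]. intro E. apply N. simpl in E. rewrite <- E. apply cl_le_refl.
    + intros [v [[Hv1 Hv2] Hv3]]. simpl in *. apply Hv2.
      apply cl_le_antisym; [exact Hv1|]. apply cl_meet_lb. exists v. split; [exact Hv3|reflexivity].
Qed.

Lemma outcome_exists (L : complete_lattice) (R : L -> L) :
  (forall W f, is_iteration L R W f -> forall w, cl_le L (R (f w)) (f w)) ->
  exists G, outcome L R G.
Proof.
  intro Hyp.
  pose (S := fun x => if excluded_middle_informative (cl_le L (R x) x) then R x else x).
  assert (hS : forall x, cl_le L (S x) x).
  { intro x. unfold S. destruct (excluded_middle_informative _); [assumption|apply cl_le_refl]. }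
  assert (HR : is_iteration L R (tw_wo L S hS) (fun a => proj1_sig a)).
  { intro w. destruct (tw_iter L S hS w) as [I1 I2]. split; [|exact I2].
    intros p Hp. pose proof (I1 p Hp) as E. rewrite E. revert E. unfold S.
    destruct (excluded_middle_informative _) as [_|N]; [reflexivity|].
    intro E. exfalso. destruct Hp as [[_ Hne] _]. exact (Hne E). }
  pose (M0 := cl_meet L (Tw L S)).
  assert (TM0 : Tw L S M0) by (apply tw_meet; intros x Hx; exact Hx).
  assert (FM : S M0 = M0).
  { apply cl_le_antisym; [apply hS|]. apply cl_meet_lb. apply tw_step. exact TM0. }
  pose (w0 := exist (Tw L S) M0 TM0 : tw_wo L S hS).
  assert (RM : R M0 = M0).
  { pose proof (Hyp _ _ HR w0) as Hle. simpl in Hle. rewrite <- FM at 2.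
    unfold S. destruct (excluded_middle_informative _) as [_|N]; [reflexivity|].
    contradiction. }
  exists M0, (tw_wo L S hS), (fun a => proj1_sig a), w0.
  split; [exact HR|]. split; [reflexivity|]. split; [exact RM|].
  intros v [Hv Hne] Fv. simpl in *. apply Hne. apply cl_le_antisym; [exact Hv|].
  apply (tw_fix_min L S hS _ (proj2_sig v)).
  - unfold S. destruct (excluded_middle_informative _) as [_|N]; [exact Fv|reflexivity].
  - exact TM0.
Qed.

Theorem mainTheorem3 (L : complete_lattice) (T : L -> L) :
  contracting L T ->
  (order_independent_I L T <-> order_independent_II L T).
Proof.
  intro hT. split.
  - intros HI R1 R2 G1 G2 Rel1 Rel2 O1 O2.
    assert (Conv : forall R, relaxation L T R ->
       forall_iterates L R (fun G =>
        (cl_le L (T G) (R G) /\ cl_le L (R G) G) /\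
        (cl_lt L (T G) G -> cl_lt L (R G) G))).
    { intros R Rel W f Hf w. destruct (Rel W f Hf w) as [A [B C]].
      assert (B' : cl_le L (R (f w)) (f w)) by exact (B (hT _)).
      split; [split; assumption|]. intros [_ Ne]. split; [exact B'|].
      intro E. apply Ne. exact (C E). }
    destruct (HI R1 (Conv R1 Rel1)) as [G [OR1 OT1]].
    destruct (HI R2 (Conv R2 Rel2)) as [G' [OR2 OT2]].
    rewrite (outcome_unique L R1 G1 G O1 OR1), (outcome_unique L R2 G2 G' O2 OR2).
    exact (outcome_unique L T G G' OT1 OT2).
  - intros HII R H.
    assert (RelR : relaxation L T R).
    { intros W f Hf w. destruct (H W f Hf w) as [[A B] C]. split; [exact A|].
      split; [intros _; exact B|]. intro E.
      apply NNPP. intro NE. destruct (C (conj (hT _) NE)) as [_ Ne]. exact (Ne E). }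
    assert (RelT : relaxation L T T).
    { intros W f Hf w. split; [apply cl_le_refl|]. split; [intro X; exact X|]. intro X; exact X. }
    destruct (outcome_exists L R (fun W f Hf w => proj2 (proj1 (H W f Hf w)))) as [G1 O1].
    destruct (outcome_exists L T (fun W f Hf w => hT (f w))) as [G2 O2].
    exists G1. split; [exact O1|].
    rewrite (HII R T G1 G2 RelR RelT O1 O2). exact O2.
Qed.
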